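(* Let $\alpha>-1$, $M\ge0$, and for $n=0,1,2,\ldots$ let $$y(x)=P_n^{\alpha,\alpha,M,M}(x)=C_0P_n^{(\alpha,\alpha)}(x)-C_1x\frac{d}{dx}P_n^{(\alpha,\alpha)}(x),$$ where $$C_0=1+M\frac{2n}{\alpha+1}\binom{n+2\alpha+1}{n}+4M^2\binom{n+2\alpha+1}{n-1}^2,\qquad C_1=\frac{2M}{2\alpha+1}\binom{n+2\alpha}{n}+\frac{2M^2}{\alpha+1}\binom{n+2\alpha}{n-1}\binom{n+2\alpha+1}{n}.$$ Define $b_0(x)=b_0(n,\alpha,x)=\frac12\left[1-(-1)^n\right]$ and $b_i(x)=\frac{2^{i-1}}{i!}(-x)^i$ for $i=1,2,3,\ldots$. Then $$\sum_{i=0}^{\infty}b_i(x)y^{(i)}(x)=0 .$$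
   Context: $P_n^{(\alpha,\beta)}(x)$ denotes the classical Jacobi polynomial, orthogonal on $[-1,1]$ with respect to $(1-x)^\alpha(1+x)^\beta$ and normalized by $P_n^{(\alpha,\beta)}(1)=\binom{n+\alpha}{n}$. Binomial coefficients $\binom{a}{m}$ are generalized (real $a$), with $\binom{a}{m}=0$ for negative integers $m$. The polynomials $P_n^{\alpha,\alpha,M,M}$ are the generalized (Koornwinder) Jacobi polynomials orthogonal on $[-1,1]$ with respect to the normalized weight $\frac{\Gamma(2\alpha+2)}{2^{2\alpha+1}\Gamma(\alpha+1)^2}(1-x^2)^\alpha+M\delta(x+1)+M\delta(x-1)$. Since $y$ is a polynomial, the sum is finite. *)

(* Defs.v *)
From HB Require Import structures.
From mathcomp Require Import all_boot all_order all_algebra.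
From mathcomp Require Import reals.
Set Implicit Arguments. Unset Strict Implicit. Unset Printing Implicit Defensive.
Import Order.TTheory GRing.Theory Num.Theory.
Local Open Scope ring_scope.

Definition gbinom {R : realType} (a : R) (m : int) : R :=
  match m with
  | Posz k => (\prod_(j < k) (a - j%:R)) / (k`!)%:R
  | Negz _ => 0
  end.

Definition jacobiP {R : realType} (n : nat) (a b : R) : {poly R} :=
  \sum_(k < n.+1)
     (gbinom (n%:R + a) (n - k)%:Z * gbinom (n%:R + b) k%:Z) *:
       ((2^-1 *: ('X - 1)) ^+ k * (2^-1 *: ('X + 1)) ^+ (n - k)).

Definition C0 {R : realType} (n : nat) (alpha M : R) : R :=
  1 + M * ((2 * n%:R) / (alpha + 1)) * gbinom (n%:R + 2 * alpha + 1) n%:Z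
    + 4 * M ^+ 2 * (gbinom (n%:R + 2 * alpha + 1) (n%:Z - 1)) ^+ 2.

(* binom(n+2a, n) / (2a+1); at 2a+1 = 0 (where the literal quotient is 0/0
   for n >= 1) we use its continuous extension binom(n+2a, n-1)/n
   (which equals the quotient whenever 2a+1 <> 0 and n >= 1). *)
Definition binom_over {R : realType} (n : nat) (alpha : R) : R :=
  if 2 * alpha + 1 != 0 then gbinom (n%:R + 2 * alpha) n%:Z / (2 * alpha + 1)
  else gbinom (n%:R + 2 * alpha) (n%:Z - 1) / n%:R.

Definition C1 {R : realType} (n : nat) (alpha M : R) : R :=
  2 * M * binom_over n alpha
    + (2 * M ^+ 2 / (alpha + 1)) * gbinom (n%:R + 2 * alpha) (n%:Z - 1)
        * gbinom (n%:R + 2 * alpha + 1) n%:Z.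

Definition genJacobiP {R : realType} (n : nat) (alpha M : R) : {poly R} :=
  C0 n alpha M *: jacobiP n alpha alpha
    - C1 n alpha M *: ('X * (jacobiP n alpha alpha)^`()).

Definition bcoef {R : realType} (n : nat) (i : nat) : {poly R} :=
  if i is 0 then ((1 - (-1) ^+ n) / 2)%:P
  else (2 ^+ i.-1 / (i`!)%:R) *: ((- 'X) ^+ i).

(* Main.v *)
Require Import Defs.
From HB Require Import structures.
From mathcomp Require Import all_boot all_order all_algebra.
From mathcomp Require Import reals.
From mathcomp Require Import ring.
Import Order.TTheory GRing.Theory Num.Theory.
Local Open Scope ring_scope.

Section S.
Variable R : realType.

Lemma taylor_comp (p h : {poly R}) N : (size p <= N)%N ->
  p \Po ('X + h) = \sum_(i < N) p^`N(i) * h ^+ i.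
Proof.
move=> hN.
rewrite /comp_poly (@nderiv_taylor_wide _ N _ _ _ (mulrC _ _)) ?size_map_polyC //.
apply: eq_bigr => i _; rewrite nderivn_map.
by rewrite -/(comp_poly 'X _) comp_polyXr.
Qed.

Lemma jac_odd n a : jacobiP n a a \Po (- 'X) = (-1) ^+ n *: jacobiP n a a :> {poly R}.
Proof.
rewrite /jacobiP rmorph_sum scaler_sumr /=.
rewrite (reindex_inj rev_ord_inj) /=.
apply: eq_bigr => k _.
rewrite subSS.
have hk : (k <= n)%N by rewrite -ltnS.
rewrite subKn // linearZ /= rmorphM /= !rmorphXn /= !linearZ /= !rmorphD /= !rmorphN /= comp_polyX !comp_polyC.
rewrite [X in X *: _ = _]mulrC; congr (_ *: _).
have e1 : (2^-1 : R) *: (- 'X + 1%:P) = - ((2^-1 : R) *: ('X - 1)).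
  by rewrite -scalerN opprB addrC.
have e2 : (2^-1 : R) *: (- 'X - 1%:P) = - ((2^-1 : R) *: ('X + 1)).
  by rewrite -scalerN opprD.
rewrite e1 e2.
set A := (2^-1 : R) *: ('X + 1); set B := (2^-1 : R) *: ('X - 1).
rewrite -mul_polyC polyC_exp polyCN polyC1.
rewrite (exprNn A) (exprNn B) mulrACA -exprD subnK //.
by rewrite [A ^+ _ * _]mulrC.
Qed.

Lemma gen_odd n a M : genJacobiP n a M \Po (- 'X) = (-1) ^+ n *: genJacobiP n a M :> {poly R}.
Proof.
set P := jacobiP n a a.
have dP : P^`() \Po (- 'X) = - ((-1) ^+ n *: P^`()).
  have := deriv_comp P (- 'X).
  rewrite jac_odd derivZ derivN derivX mulrN1 => ->.
  by rewrite opprK.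
rewrite /genJacobiP -/P linearB /= !linearZ /= rmorphM /= comp_polyX dP jac_odd.
rewrite mulrN mulNr opprK -scalerAr !scalerA scalerDr !scalerN !scalerA -/P; congr (_ *: _ + - (_ *: _)); apply: mulrC.

Qed.

Lemma term_eq n (y : {poly R}) i :
  bcoef n i.+1 * y^`(i.+1) = 2^-1 *: (y^`N(i.+1) * (- ('X *+ 2)) ^+ i.+1).
Proof.
rewrite /bcoef nderivn_def -mulNrn -!scaler_nat exprZn.
rewrite -scalerAl -scalerAr scalerA -scalerAr scalerA [_ * (- 'X) ^+ _]mulrC.
congr (_ *: _).
have hf : ((i.+1)`!%:R : R) != 0 by rewrite pnatr_eq0 -lt0n fact_gt0.
rewrite exprS /=.
field.
by rewrite hf /=.
Qed.
End S.


Theorem theorem4 (R : realType) (alpha M : R) (n : nat) :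
  -1 < alpha -> 0 <= M ->
  forall N : nat, (size (genJacobiP n alpha M) <= N)%N ->
    \sum_(i < N) bcoef n i * (genJacobiP n alpha M)^`(i) = 0.
Proof.
move=> _ _ N hN.
set y := genJacobiP n alpha M.
case: N hN => [|N] hN; first by rewrite big_ord0.
have T := @taylor_comp _ _ (- ('X *+ 2)) _ hN.
have eX : 'X + - ('X *+ 2) = - 'X :> {poly R}.
  by rewrite mulr2n opprD addrA subrr add0r.
rewrite eX gen_odd big_ord_recl nderivn0 expr0 mulr1 in T.
rewrite -/y in T.
rewrite big_ord_recl.
under eq_bigr => i _ do rewrite lift0 term_eq.
have T' : \sum_(i < N) y^`N(i.+1) * (- ('X *+ 2)) ^+ i.+1 = \sum_(i < N)
       y^`N(lift ord0 i) * ('X *- 2) ^+ lift ord0 i.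
  by apply: eq_bigr => i _; rewrite lift0.
rewrite -scaler_sumr.
have -> : \sum_(i < N) y^`N(i.+1) * (- ('X *+ 2)) ^+ i.+1
          = (-1) ^+ n *: y - y by rewrite T' T addrC addKr.
clearbody y.
rewrite /= mul_polyC scalerBr scalerA -scalerBl -scalerDl.
set c := (X in X *: y).
have -> : c = 0 by rewrite /c; field.
by rewrite scale0r.
Qed.
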